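(* A complex symmetric tensor $S\in\mathbb{C}^{n\times n\times n}$ of order 3 belongs to $\mathrm{OW}_n(\mathbb{C})$ if and only if its slices $S_1,\dots,S_n$ are diagonalizable and pairwise commute.
   Context: For a symmetric tensor $S$ its $k$-th slice is $S_k=(S_{ijk})_{1\le i,j\le n}$. Identify $S$ with the cubic form $f(x)=\sum_{i,j,k}S_{ijk}x_ix_jx_k$. $\mathrm{OW}_n(\mathbb{C})$ is the set of $f\in\mathbb{C}[x_1,\dots,x_n]_3$ that can be written $f(x)=g(Ax)$ with $A\in M_n(\mathbb{C})$ satisfying $A^TA=\mathrm{Id}$ and $g=\alpha_1x_1^3+\cdots+\alpha_nx_n^3$, $\alpha_i\in\mathbb{C}$. *)

(* Defs.v *)
From HB Require Import structures.
From mathcomp Require Import all_boot all_order all_algebra.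
From mathcomp Require Import mxred.
Set Implicit Arguments. Unset Strict Implicit. Unset Printing Implicit Defensive.
Import Order.TTheory GRing.Theory Num.Theory.
Local Open Scope ring_scope.

Definition tensor3 (C : Type) (n : nat) := 'I_n -> 'I_n -> 'I_n -> C.

(* Symmetric: invariant under all permutations of indices
   (generated by the two transpositions below). *)
Definition symmetric_tensor (C : Type) (n : nat) (S : tensor3 C n) : Prop :=
  forall i j k, S i j k = S j i k /\ S i j k = S i k j.

Definition slice (C : Type) (n : nat) (S : tensor3 C n) (k : 'I_n) : 'M[C]_n :=
  \matrix_(i < n, j < n) S i j k.

Definition cubic_form (C : nzRingType) (n : nat) (S : tensor3 C n) (x : 'cV[C]_n) : C :=
  \sum_(i < n) \sum_(j < n) \sum_(k < n) S i j k * x i 0 * x j 0 * x k 0.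

Definition diag_cubic (C : nzRingType) (n : nat) (alpha : 'I_n -> C) (y : 'cV[C]_n) : C :=
  \sum_(l < n) alpha l * y l 0 ^+ 3.

(* OW_n(C): f(x) = g(Ax) with A^T A = Id and g a sum of cubes.
   The polynomial identity f = g(A .) is stated as an identity of polynomial
   functions on C^n, which is equivalent since C is infinite. *)
Definition OW (C : nzRingType) (n : nat) (S : tensor3 C n) : Prop :=
  exists (A : 'M[C]_n) (alpha : 'I_n -> C),
    A^T *m A = 1%:M /\
    forall x : 'cV[C]_n, cubic_form S x = diag_cubic alpha (A *m x).

(* Main.v *)
Require Import Defs.
From HB Require Import structures.
From mathcomp Require Import all_boot all_order all_algebra.
From mathcomp Require Import mxred.
From mathcomp Require Import ring.
Import Order.TTheory GRing.Theory Num.Theory.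
Local Open Scope ring_scope.
Set Implicit Arguments. Unset Strict Implicit. Unset Printing Implicit Defensive.

Section Sqrt.
Variable C : numClosedFieldType.

Lemma interp (xs : seq C) (v : C -> C) :
  exists p : {poly C}, forall x, x \in xs -> p.[x] = v x.
Proof.
elim: xs => [|x xs [p Hp]]; first by exists 0.
case Hx: (x \in xs).
  exists p => y; rewrite inE => /predU1P [->|]; [exact: Hp | exact: Hp].
pose q := \prod_(y <- xs) ('X - y%:P).
have qx : q.[x] != 0.
  rewrite /q horner_prod prodf_seq_neq0; apply/allP => y yin /=.
  rewrite hornerXsubC subr_eq0; apply/eqP => exy; by rewrite exy yin in Hx.
have qy y : y \in xs -> q.[y] = 0.
  move=> yin; rewrite /q horner_prod; apply/eqP; rewrite prodf_seq_eq0.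
  by apply/hasP; exists y => //=; rewrite hornerXsubC subrr.
exists (p + ((v x - p.[x]) / q.[x]) *: q) => y; rewrite inE => /predU1P [->|yin].
  by rewrite hornerD hornerZ mulfVK // addrC subrK.
rewrite hornerD hornerZ (qy y yin). by rewrite mulr0 addr0 Hp.
Qed.

Lemma prod_dvd (rs : seq C) (t : {poly C}) :
  (forall r, r \in rs -> root t r) ->
  \prod_(r <- rs) ('X - r%:P) %| t ^+ size rs.
Proof.
elim: rs => [|r rs IH] H; first by rewrite big_nil dvd1p.
rewrite big_cons /= exprS; apply: dvdp_mul.
  by rewrite dvdp_XsubCl; apply: H; rewrite mem_head.
by apply: IH => y yin; apply: H; rewrite inE yin orbT.
Qed.

Lemma newton (t0 : {poly C}) (s0 : {poly C}) (j : nat) :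
  t0 = s0 ^+ 2 * 'X - 1 ->
  exists s : {poly C}, t0 ^+ (2 ^ j) %| s ^+ 2 * 'X - 1.
Proof.
move=> Ht; elim: j => [|j [s Hs]]; first by exists s0; rewrite expn0 expr1 Ht.
pose a : C := - 2^-1.
have ha : 1 + 2 * a = 0.
  rewrite /a mulrN mulfV ?subrr //; by rewrite pnatr_eq0.
pose t := s ^+ 2 * 'X - 1.
exists (s * (1 + a%:P * t)).
have -> : (s * (1 + a%:P * t)) ^+ 2 * 'X - 1 =
   t * (1 + 2 * a%:P) + t^+2 * (2 * a%:P + a%:P ^+ 2 + a%:P^+2 * t).
  rewrite /t; ring.
have -> : 1 + 2 * a%:P = 0 :> {poly C}.
  by by rewrite -polyC_natr -polyCM -polyCD ha.
rewrite mulr0 add0r expnSr exprM; apply: dvdp_mulr.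
rewrite -/t; by apply: dvdp_exp2r.
Qed.

End Sqrt.


Lemma mx_sqrt_inv (C : numClosedFieldType) n (G : 'M[C]_n.+1) :
  G \in unitmx -> exists s, (horner_mx G s) ^+ 2 * G = 1.
Proof.
move=> Gu.
have [rs Hc] := closed_field_poly_normal (char_poly G).
rewrite (monicP (char_poly_monic G)) scale1r in Hc.
have rnz r : r \in rs -> r != 0.
  move=> rin; apply/eqP => r0.
  have : root (char_poly G) r.
    rewrite Hc /root horner_prod; apply/eqP; apply/eqP; rewrite prodf_seq_eq0.
    by apply/hasP; exists r => //=; rewrite hornerXsubC subrr.
  rewrite r0.
  rewrite /root horner_coef0 char_poly_det => /eqP /eqP.
  rewrite mulf_eq0 signr_eq0 /= => /eqP d0.
  by move: Gu; rewrite unitmxE unitfE d0 eqxx.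
have [s0 Hs0] := interp rs (fun x => (sqrtC x)^-1).
pose t0 := s0 ^+ 2 * 'X - 1.
have rt0 r : r \in rs -> root t0 r.
  move=> rin; rewrite /root /t0 !hornerE Hs0 // exprVn sqrtCK mulVf ?subrr //.
  exact: rnz.
have d1 := prod_dvd rt0.
have [s Hs] := newton (size rs) (erefl t0).
have d2 : char_poly G %| s ^+ 2 * 'X - 1.
  rewrite Hc; apply: dvdp_trans d1 _; apply: dvdp_trans Hs.
  by apply: dvdp_exp2l; apply: ltnW; apply: ltn_expl.
have [q Hq] := dvdpP _ _ d2.
exists s; apply/eqP; rewrite -subr_eq0.
have := congr1 (horner_mx G) Hq.
rewrite rmorphM /= Cayley_Hamilton mulr0 rmorphB rmorphM rmorphXn /= horner_mx_X rmorph1.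
by move=> ->.
Qed.


Lemma horner_mx_sym (R : comNzRingType) n (G : 'M[R]_n.+1) (p : {poly R}) :
  G^T = G -> (horner_mx G p)^T = horner_mx G p.
Proof.
move=> GT; elim/poly_ind: p => [|p c IH]; first by rewrite rmorph0 trmx0.
rewrite rmorphD rmorphM /= horner_mx_X horner_mx_C raddfD /= -!mulmxE trmx_mul IH GT.
rewrite tr_scalar_mx; congr (_ + _).
by have := comm_mx_horner p (comm_mx_refl G).
Qed.

Lemma diag_tr (R : nzRingType) n (D : 'M[R]_n) : is_diag_mx D -> D^T = D.
Proof.
move=> /is_diag_mxP H; apply/matrixP => i j; rewrite mxE.
case: (eqVneq i j) => [->//|ij]; rewrite !H //; last by rewrite eq_sym.
Qed.

Lemma orth_codiag (C : numClosedFieldType) n (As : 'I_n -> 'M[C]_n) :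
  (forall k, (As k)^T = As k) -> (forall k, diagonalizable (As k)) ->
  (forall k l, comm_mx (As k) (As l)) ->
  exists (Q : 'M[C]_n) (D : 'I_n -> 'M[C]_n), Q *m Q^T = 1%:M /\
    (forall k, is_diag_mx (D k)) /\ (forall k, Q *m As k = D k *m Q).
Proof.
case: n As => [|n] As Asym Adiag Acomm.
  exists 1%:M, (fun _ => 0); split; first by apply/matrixP => [[]].
  by split=> [k|[]]; [apply: mx0_is_diag|].
pose fs := [seq As k | k <- enum 'I_n.+1].
have [P Pu /allP Pd] : codiagonalizable fs.
  apply/codiagonalizableP; split.
    by move=> f g /mapP [k _ ->] /mapP [l _ ->]; apply: Acomm.
  by move=> f /mapP [k _ ->].
pose D k := P *m As k *m invmx P.
have Dd k : is_diag_mx (D k).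
  have := Pd (As k) (map_f _ (mem_enum _ k)).
  by rewrite /= /similar_to /conjmx pinvmxE.
have DP k : D k *m P = P *m As k by rewrite /D mulmxKV.
have DT k : (D k)^T = D k by apply: diag_tr.
pose G := P *m P^T.
have Gu : G \in unitmx by rewrite unitmx_mul unitmx_tr Pu.
have GT : G^T = G by rewrite /G trmx_mul trmxK.
have DG k : comm_mx (D k) G.
  have E : P^T *m D k = As k *m P^T.
    by rewrite -{1}(DT k) -trmx_mul DP trmx_mul Asym.
  by rewrite /comm_mx /G mulmxA DP -[RHS]mulmxA E mulmxA.
have [s Hs] := mx_sqrt_inv Gu.
pose Rm := horner_mx G s.
have RT : Rm^T = Rm by apply: horner_mx_sym.
have RD k : comm_mx (D k) Rm by apply: comm_mx_horner.
have RG : comm_mx Rm G by apply: comm_horner_mx.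
exists (Rm *m P), D; split; last split => //.
  rewrite trmx_mul RT mulmxA -(mulmxA Rm) -/G RG -mulmxA mulmxE.
  have RG' : G * Rm = Rm * G by symmetry; exact: RG.
  by rewrite mulrA RG' -mulrA RG' mulrA -expr2 Hs.
move=> k; by rewrite -mulmxA -DP mulmxA -(RD k) mulmxA.
Qed.


Section Tensor.
Variable C : numFieldType.
Variable n : nat.
Implicit Types (W : tensor3 C n) (x y z : 'cV[C]_n).

Definition tri W x y z : C :=
  \sum_(i < n) \sum_(j < n) \sum_(k < n) W i j k * x i 0 * y j 0 * z k 0.

Lemma cubic_tri W x : cubic_form W x = tri W x x x.
Proof. by []. Qed.

Lemma triD1 W x x' y z : tri W (x + x') y z = tri W x y z + tri W x' y z.
Proof.
rewrite /tri -big_split; apply: eq_bigr => i _ /=.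
rewrite -big_split; apply: eq_bigr => j _ /=.
rewrite -big_split; apply: eq_bigr => k _ /=.
rewrite mxE; ring.
Qed.

Lemma triZ1 W c x y z : tri W (c *: x) y z = c * tri W x y z.
Proof.
rewrite /tri mulr_sumr; apply: eq_bigr => i _ /=.
rewrite mulr_sumr; apply: eq_bigr => j _ /=.
rewrite mulr_sumr; apply: eq_bigr => k _ /=.
rewrite mxE; ring.
Qed.


Lemma tri_sym12 W x y z : symmetric_tensor W -> tri W x y z = tri W y x z.
Proof.
move=> hW; rewrite /tri exchange_big; apply: eq_bigr => i _.
apply: eq_bigr => j _; apply: eq_bigr => k _.
rewrite (proj1 (hW j i k)); ring.
Qed.

Lemma tri_sym23 W x y z : symmetric_tensor W -> tri W x y z = tri W x z y.
Proof.
move=> hW; rewrite /tri; apply: eq_bigr => i _.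
rewrite exchange_big; apply: eq_bigr => j _; apply: eq_bigr => k _.
rewrite (proj2 (hW i k j)); ring.
Qed.

Lemma tri_delta W i j k :
  tri W (delta_mx i 0) (delta_mx j 0) (delta_mx k 0) = W i j k.
Proof.
rewrite /tri (bigD1 i) //= [X in _ + X]big1 ?addr0; last first.
  move=> a /negPf ai; apply: big1 => b _; apply: big1 => c _.
  by rewrite mxE ai /= !(mulr0, mul0r).
rewrite (bigD1 j) //= [X in _ + X]big1 ?addr0; last first.
  move=> b /negPf bj; apply: big1 => c _.
  by rewrite [delta_mx j 0 b 0]mxE bj /= !(mulr0, mul0r).
rewrite (bigD1 k) //= [X in _ + X]big1 ?addr0; last first.
  move=> c /negPf ck.
  by rewrite [delta_mx k 0 c 0]mxE ck /= !(mulr0, mul0r).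
by rewrite !mxE !eqxx /= !mulr1.
Qed.

End Tensor.


Section Polar.
Variable C : numFieldType.
Variable n : nat.
Variable W : tensor3 C n.
Hypothesis hW : symmetric_tensor W.
Local Notation T := (tri W).

Lemma triD2 x y y' z : T x (y + y') z = T x y z + T x y' z.
Proof. by rewrite [LHS](tri_sym12 _ _ _ hW) triD1 (tri_sym12 y x z hW) (tri_sym12 y' x z hW). Qed.
Lemma triZ2 c x y z : T x (c *: y) z = c * T x y z.
Proof. by rewrite [LHS](tri_sym12 _ _ _ hW) triZ1 (tri_sym12 y x z hW). Qed.
Lemma triD3 x y z z' : T x y (z + z') = T x y z + T x y z'.
Proof. by rewrite [LHS](tri_sym23 _ _ _ hW) triD2 (tri_sym23 x z y hW) (tri_sym23 x z' y hW). Qed.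
Lemma triZ3 c x y z : T x y (c *: z) = c * T x y z.
Proof. by rewrite [LHS](tri_sym23 _ _ _ hW) triZ2 (tri_sym23 x z y hW). Qed.

Lemma tri_expand x y c :
  T (x + c *: y) (x + c *: y) (x + c *: y) =
  T x x x + 3 * c * T x x y + 3 * c ^+ 2 * T x y y + c ^+ 3 * T y y y.
Proof.
rewrite !triD1 !triD2 !triD3 !triZ1 !triZ2 !triZ3.
have e1 : T x y x = T x x y by rewrite (tri_sym23 x y x hW).
have e2 : T y x x = T x x y by rewrite (tri_sym12 y x x hW) (tri_sym23 x y x hW).
have e3 : T y x y = T x y y by rewrite (tri_sym12 y x y hW).
have e4 : T y y x = T x y y by rewrite (tri_sym23 y y x hW) (tri_sym12 y x y hW).
rewrite e1 e2 e3 e4; ring.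
Qed.

Lemma polar (H : forall x, T x x x = 0) i j k : W i j k = 0.
Proof.
have Hxyy x y : T x y y = 0.
  have := tri_expand x y 1; have := tri_expand x y (-1).
  rewrite !H; set a := T x x y; set b := T x y y => h1 h2.
  have : 6 * b = 0.
    have -> : 6 * b = (0 + 3 * (-1) * a + 3 * (-1) ^+ 2 * b + (-1) ^+ 3 * 0)
       + (0 + 3 * 1 * a + 3 * 1 ^+ 2 * b + 1 ^+ 3 * 0) by ring.
    by rewrite -h1 -h2 addr0.
  by move/eqP; rewrite mulf_eq0 pnatr_eq0 /= => /eqP.
have Hxyz x y z : T x y z = 0.
  have := Hxyy x (y + z); rewrite !triD2 !triD3 !Hxyy add0r addr0.
  rewrite (tri_sym23 _ z y hW) -mulr2n => /eqP; rewrite mulrn_eq0 /= => /eqP //.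
by rewrite -tri_delta Hxyz.
Qed.

End Polar.


Lemma cube_sum (R : comNzRingType) n (f : 'I_n -> R) :
  (\sum_i f i) ^+ 3 = \sum_i \sum_j \sum_k f i * f j * f k.
Proof.
rewrite exprS expr2 big_distrl /=; apply: eq_bigr => i _.
rewrite big_distrl big_distrr /=; apply: eq_bigr => j _.
rewrite !big_distrr /=; apply: eq_bigr => k _; by rewrite mulrA.
Qed.

Lemma swap4 (R : comNzRingType) n (a : 'I_n -> R) F :
  \sum_(l < n) a l * (\sum_(i < n) \sum_(j < n) \sum_(k < n) F l i j k) =
  \sum_(i < n) \sum_(j < n) \sum_(k < n) \sum_(l < n) a l * F l i j k.
Proof.
under eq_bigr => l _.
  rewrite mulr_sumr; under eq_bigr => i _.
    rewrite mulr_sumr; under eq_bigr => j _ do rewrite mulr_sumr.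
  over. over.
rewrite exchange_big; apply: eq_bigr => i _.
rewrite exchange_big; apply: eq_bigr => j _.
by rewrite exchange_big.
Qed.

Lemma cubic_decomp (R : comNzRingType) n (S : tensor3 R n) (A : 'M[R]_n) alpha :
  (forall i j k, S i j k = \sum_l alpha l * A l i * A l j * A l k) ->
  forall x, cubic_form S x = diag_cubic alpha (A *m x).
Proof.
move=> HS x; rewrite /cubic_form /diag_cubic.
under [RHS]eq_bigr => l _ do rewrite mxE cube_sum.
rewrite swap4; apply: eq_bigr => i _; apply: eq_bigr => j _; apply: eq_bigr => k _.
rewrite HS !big_distrl; apply: eq_bigr => l _ /=; ring.
Qed.


Lemma sum_diag_l (R : nzRingType) n (D : 'M[R]_n) (f : 'I_n -> R) l :
  is_diag_mx D -> \sum_m D l m * f m = D l l * f l.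
Proof.
move=> /is_diag_mxP H; rewrite (bigD1 l) //= big1 ?addr0 // => m ml.
by rewrite H ?mul0r // eq_sym.
Qed.

Lemma sum_diag_r (R : nzRingType) n (D : 'M[R]_n) (f : 'I_n -> R) l :
  is_diag_mx D -> \sum_m f m * D m l = f l * D l l.
Proof.
move=> /is_diag_mxP H; rewrite (bigD1 l) //= big1 ?addr0 // => m ml.
by rewrite H ?mulr0.
Qed.

Lemma triB (C : numFieldType) n (W1 W2 : tensor3 C n) x y z :
  tri (fun i j k => W1 i j k - W2 i j k) x y z = tri W1 x y z - tri W2 x y z.
Proof.
rewrite /tri -sumrB; apply: eq_bigr => i _; rewrite -sumrB; apply: eq_bigr => j _.
rewrite -sumrB; apply: eq_bigr => k _; ring.
Qed.

Lemma OW_decomp (C : numFieldType) n (S : tensor3 C n) (hS : symmetric_tensor S)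
  (A : 'M[C]_n) alpha :
  (forall x, cubic_form S x = diag_cubic alpha (A *m x)) ->
  forall i j k, S i j k = \sum_l alpha l * A l i * A l j * A l k.
Proof.
move=> Hf.
pose S' := fun i j k => \sum_l alpha l * A l i * A l j * A l k.
have hS' : symmetric_tensor S'.
  move=> i j k; split; apply: eq_bigr => l _; ring.
have Hf' := @cubic_decomp _ _ S' A alpha (fun _ _ _ => erefl).
pose W := fun i j k => S i j k - S' i j k.
have hW : symmetric_tensor W.
  move=> i j k; rewrite /W; split.
    by rewrite (proj1 (hS i j k)) (proj1 (hS' i j k)).
  by rewrite (proj2 (hS i j k)) (proj2 (hS' i j k)).
move=> i j k; apply/eqP; rewrite -subr_eq0; apply/eqP.
apply: (polar hW) => x.
by rewrite triB -!cubic_tri Hf Hf' subrr.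
Qed.

Lemma fwd (C : numClosedFieldType) n (S : tensor3 C n) (hS : symmetric_tensor S) :
  OW S -> (forall k, diagonalizable (slice S k)) /\
          (forall k l, comm_mx (slice S k) (slice S l)).
Proof.
case=> A [alpha [hA Hf]].
have Hd := OW_decomp hS Hf.
have AAT : A *m A^T = 1%:M := mulmx1C hA.
have Au : A \in unitmx := (mulmx1_unit AAT).1.
pose d k := \row_l (alpha l * A l k).
have Hsl k : slice S k = A^T *m diag_mx (d k) *m A.
  apply/matrixP => i j; rewrite /slice mul_mx_diag !mxE Hd; apply: eq_bigr => l _.
  rewrite !mxE; ring.
split.
  move=> k; exists A => //; rewrite /similar_to /conjmx pinvmxE // Hsl.
  rewrite !mulmxA AAT mul1mx -mulmxA mulmxV // mulmx1; exact: diag_mx_is_diag.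
have E X Y : (A^T *m X *m A) *m (A^T *m Y *m A) = A^T *m (X *m Y) *m A.
  by rewrite !mulmxA -(mulmxA _ A A^T) AAT mulmx1.
by move=> k l; rewrite /comm_mx !Hsl !E diag_mxC.
Qed.

Lemma bwd (C : numClosedFieldType) n (S : tensor3 C n) (hS : symmetric_tensor S) :
  (forall k, diagonalizable (slice S k)) ->
  (forall k l, comm_mx (slice S k) (slice S l)) -> OW S.
Proof.
move=> Hd Hc.
have Ssym k : (slice S k)^T = slice S k.
  by apply/matrixP => i j; rewrite !mxE (proj1 (hS j i k)).
have [Q [D [QQ [Dd QA]]]] := orth_codiag Ssym Hd Hc.
pose alpha l := \sum_k D k l l * Q l k.
exists Q, alpha; split; first exact: mulmx1C QQ.
apply: cubic_decomp => i j k.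
have F2 k' l i' : \sum_j Q l j * S j i' k' = D k' l l * Q l i'.
  have h := congr1 (fun M : 'M[C]_n => M l i') (QA k'); rewrite /= !mxE (sum_diag_l _ _ (Dd k')) in h.
  by rewrite -h; apply: eq_bigr => j' _; rewrite mxE.
have F3 l : \sum_m Q l m * Q l m = 1.
  have h := congr1 (fun M : 'M[C]_n => M l l) QQ; rewrite /= !mxE eqxx /= in h.
  apply: etrans h; by apply: eq_bigr => m _; rewrite mxE.
have Dl k' l : D k' l l = alpha l * Q l k'.
  rewrite /alpha mulr_suml.
  have E1 : \sum_m D m l l * Q l m * Q l k' = \sum_m Q l m * (\sum_j Q l j * S j m k').
    apply: eq_bigr => m _; rewrite mulrAC -F2 mulrC; congr (_ * _).
    by apply: eq_bigr => j' _; rewrite (proj2 (hS j' k' m)).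
  rewrite E1 (eq_bigr (fun m => D k' l l * (Q l m * Q l m))); last first.
    by move=> m _; rewrite F2; ring.
  by rewrite -mulr_sumr F3 mulr1.
have F1 : slice S k = Q^T *m (D k *m Q) by rewrite -QA mulmxA (mulmx1C QQ) mul1mx.
have h := congr1 (fun M : 'M[C]_n => M i j) F1; rewrite /= !mxE in h.
rewrite h; apply: eq_bigr => l _; rewrite !mxE (sum_diag_l _ _ (Dd k)) Dl; ring.
Qed.

Theorem theorem10 (C : numClosedFieldType) (n : nat) (S : tensor3 C n)
  (hS : symmetric_tensor S) :
  OW S <->
  ((forall k : 'I_n, diagonalizable (slice S k)) /\
   (forall k l : 'I_n, comm_mx (slice S k) (slice S l))).
Proof.
split; first exact: fwd.
by case; apply: bwd.
Qed.
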